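(* Let $S$ be a semigroup, $I, J$ sets and $P$ a $J \times I$ matrix with entries in $S$, and suppose the Rees matrix semigroup $M = M(S; I, J; P)$ is finitely generated. Let $\sigma : X^+ \to S$ and $\tau : Y^+ \to M$ be finite choices of generators. Then there is a rational transduction $\Phi$ from $\hat{X}^*$ to $\hat{Y}^*$ such that $L_\tau(M)$ is the Kleene closure of the image of $L_\sigma(S)$ under $\Phi$.
   Context: The Rees matrix semigroup $M(S; I, J; P)$ (with $P$ having all entries in $S$) has elements $I \times S \times J$ and product $(i_1, g_1, j_1)(i_2, g_2, j_2) = (i_1, g_1 P_{j_1 i_2} g_2, j_2)$. For a semigroup $S$, $S^1$ denotes the monoid obtained by adjoining a new identity $1$ (even if $S$ already has one). A choice of generators for $S$ is a surjective morphism $\sigma : X^+ \to S$ from a free semigroup, finite if $X$ is finite; it extends uniquely to $\sigma^1 : X^* \to S^1$. Let $\overline{X} = \{\overline{x} : x \in X\}$ be a set of formal inverses, $\hat{X} = X \cup \overline{X}$. The loop automaton of $S$ with respect to $\sigma$ is the directed labelled graph with vertex set $S^1$, having for each $a \in S^1$ and $x \in X$ an edge from $a$ to $a(x\sigma)$ labelled $x$ and an edge from $a(x\sigma)$ to $a$ labelled $\overline{x}$. The loop problem $L_\sigma(S) \subseteq \hat{X}^*$ is the set of words labelling paths from $1$ to $1$ in this graph (including the empty word). A rational transduction is a relation between free monoids realised by a finite-state transducer. *)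

(* Defs.v *)
From mathcomp Require Import all_boot.
From Stdlib Require List.
Set Implicit Arguments. Unset Strict Implicit. Unset Printing Implicit Defensive.

Definition assoc_op (S : Type) (mul : S -> S -> S) : Prop :=
  forall a b c, mul a (mul b c) = mul (mul a b) c.

Definition rees_mul (S I J : Type) (mul : S -> S -> S) (P : J -> I -> S)
  (a b : I * S * J) : I * S * J :=
  let '(i1, g1, j1) := a in
  let '(i2, g2, j2) := b in
  (i1, mul (mul g1 (P j1 i2)) g2, j2).

(* Free semigroup X^+ = nonempty words over X.  A morphism X^+ -> S is
   determined by its values on letters gen : X -> S; [eval_word] is that
   morphism applied to the nonempty word x :: w. *)
Definition eval_word (X S : Type) (mul : S -> S -> S) (gen : X -> S)
  (x : X) (w : seq X) : S :=
  foldl (fun acc y => mul acc (gen y)) (gen x) w.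

Definition is_choice_of_generators (X S : Type) (mul : S -> S -> S)
  (gen : X -> S) : Prop :=
  forall s : S, exists (x : X) (w : seq X), eval_word mul gen x w = s.

Definition finitely_generated (S : Type) (mul : S -> S -> S) : Prop :=
  exists (Z : finType) (gen : Z -> S), is_choice_of_generators mul gen.

(* S^1 = option S, None being the adjoined identity; right action of S. *)
Definition mul1 (S : Type) (mul : S -> S -> S) (a : option S) (s : S) : S :=
  match a with None => s | Some a' => mul a' s end.

(* hat X = X + X: inl x is x, inr x is the formal inverse xbar.
   lpath a w b : w labels a path from a to b in the loop automaton. *)
Fixpoint lpath (X S : Type) (mul : S -> S -> S) (gen : X -> S)
  (a : option S) (w : seq (X + X)) (b : option S) : Prop :=
  match w with
  | [::] => a = b
  | inl x :: w' => lpath mul gen (Some (mul1 mul a (gen x))) w' b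
  | inr x :: w' => exists c : option S,
      Some (mul1 mul c (gen x)) = a /\ lpath mul gen c w' b
  end.

Definition loop_problem (X S : Type) (mul : S -> S -> S) (gen : X -> S)
  (w : seq (X + X)) : Prop :=
  lpath mul gen None w None.

Inductive transducer_accepts (A B : Type) (Q : finType)
  (final : pred Q) (delta : seq (Q * seq A * seq B * Q))
  : Q -> seq A -> seq B -> Prop :=
  | ta_final q : final q -> transducer_accepts final delta q [::] [::]
  | ta_step q a b q' u v :
      List.In (q, a, b, q') delta ->
      transducer_accepts final delta q' u v ->
      transducer_accepts final delta q (a ++ u) (b ++ v).

Definition rational_transduction (A B : Type)
  (Phi : seq A -> seq B -> Prop) : Prop :=
  exists (Q : finType) (q0 : Q) (final : pred Q)
         (delta : seq (Q * seq A * seq B * Q)),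
    forall u v, Phi u v <-> transducer_accepts final delta q0 u v.

Definition image_lang (A B : Type) (Phi : seq A -> seq B -> Prop)
  (L : seq A -> Prop) (v : seq B) : Prop :=
  exists u, L u /\ Phi u v.

Inductive kleene_star (B : Type) (L : seq B -> Prop) : seq B -> Prop :=
  | ks_nil : kleene_star L [::]
  | ks_cat u v : L u -> kleene_star L v -> kleene_star L (u ++ v).

(* Main.v *)
Require Import Defs.
From mathcomp Require Import all_boot.
From Stdlib Require Import Classical ClassicalEpsilon Lia.
From mathcomp Require Import zify.
Set Implicit Arguments. Unset Strict Implicit.

Lemma lpath_cat (X S : Type) (mul : S -> S -> S) (gen : X -> S) w1 w2 a b :
  lpath mul gen a (w1 ++ w2) b <-> exists m, lpath mul gen a w1 m /\ lpath mul gen m w2 b.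
Proof.
elim: w1 a => [|[x|x] w1 IH] a /=.
- split; [move=> H; exists a; done | by move=> [m [-> H]]].
- exact: IH.
- split.
  + move=> [c [Hc H]]. have [m [H1 H2]] := (IH c).1 H. exists m; split => //. exists c; done.
  + move=> [m [[c [Hc H1]] H2]]. exists c; split => //. apply/IH; exists m; done.
Qed.

Lemma foldl_assoc (X S : Type) (mul : S -> S -> S) (gen : X -> S) :
  assoc_op mul -> forall ws a b,
  foldl (fun acc y => mul acc (gen y)) (mul a b) ws
  = mul a (foldl (fun acc y => mul acc (gen y)) b ws).
Proof. move=> Ha; elim=> [|y ws IH] a b //=. by rewrite -IH -Ha. Qed.

Lemma lpath_fwd (X S : Type) (mul : S -> S -> S) (gen : X -> S) :
  assoc_op mul -> forall x ws c b,
  lpath mul gen c (map inl (x :: ws)) b <-> b = Some (mul1 mul c (eval_word mul gen x ws)).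
Proof.
move=> Ha x ws; elim: ws x => [|y ws IH] x c b /=.
- by split=> ->.
- have := IH y (Some (mul1 mul c (gen x))) b; rewrite /= => ->.
  have -> : eval_word mul gen x (y :: ws) = mul (gen x) (eval_word mul gen y ws).
    by rewrite /eval_word /= foldl_assoc.
  by case: c => [c|] /=; [rewrite -Ha|].
Qed.

Lemma lpath_inv (X S : Type) (mul : S -> S -> S) (gen : X -> S) ws a b :
  lpath mul gen a (rev (map inr ws)) b <-> lpath mul gen b (map inl ws) a.
Proof.
elim: ws a b => [|x ws IH] a b /=.
- by split=> ->.
- rewrite rev_cons -cats1 lpath_cat /=. split.
  + move=> [m [H1 [c [Hc Hcb]]]]. subst. by apply/IH.
  + move=> H. exists (Some (mul1 mul b (gen x))); split; [by apply/IH | by exists b].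
Qed.

Lemma choice_fun (A B : Type) (R : A -> B -> Prop) :
  (forall a, exists b, R a b) -> exists f : A -> B, forall a, R a (f a).
Proof.
move=> H. exists (fun a => proj1_sig (constructive_indefinite_description _ (H a))).
move=> a. exact: proj2_sig.
Qed.

Lemma canon_fun (A B : Type) (h : A -> B) :
  exists c : A -> A, (forall a, h (c a) = h a) /\ (forall a b, h a = h b -> c a = c b).
Proof.
destruct (classic (inhabited A)) as [[a0]|N].
- have HR : forall b : B, exists a : A, (exists a', h a' = b) -> h a = b.
    move=> b. destruct (classic (exists a', h a' = b)) as [[a' Ha']|NN].
    + by exists a'.
    + exists a0 => E; by case: NN.
  have [f Hf] := choice_fun HR.
  exists (fun a => f (h a)); split.
  + move=> a; apply: Hf; by exists a.
  + by move=> a b ->.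
- exists id; split => // a; by case: N.
Qed.

Lemma last_letter (X S : Type) (mul : S -> S -> S) (gen : X -> S) :
  is_choice_of_generators mul gen -> forall s, exists d x, s = mul1 mul d (gen x).
Proof.
move=> H s. have [x [w <-]] := H s. case/lastP: w => [|w y].
- by exists None, x.
- exists (Some (eval_word mul gen x w)), y. by rewrite /eval_word foldl_rcons.
Qed.

Lemma In_mem (T : eqType) (x : T) s : x \in s -> List.In x s.
Proof.
elim: s => [|y s IH] //=. rewrite in_cons => /orP [/eqP ->|/IH]; [left|right] => //.
Qed.

Lemma In_map (A B : Type) (f : A -> B) s x : List.In x s -> List.In (f x) (map f s).
Proof. elim: s => [|y s IH] //= [->|H]; [left|right; exact: IH] => //. Qed.

Lemma In_map_inv (A B : Type) (f : A -> B) s t : List.In t (map f s) -> exists x, f x = t.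
Proof. elim: s => [|y s IH] //= [<-|H]; [by exists y | exact: IH]. Qed.

Unset Implicit Arguments.

Theorem theorem4p1 (S : Type) (mul : S -> S -> S) (mul_assoc : assoc_op mul)
  (I J : Type) (P : J -> I -> S)
  (Mfg : finitely_generated (rees_mul mul P))
  (X : finType) (sigma : X -> S) (Hsigma : is_choice_of_generators mul sigma)
  (Y : finType) (tau : Y -> I * S * J)
  (Htau : is_choice_of_generators (rees_mul mul P) tau) :
  exists Phi : seq (X + X) -> seq (Y + Y) -> Prop,
    rational_transduction Phi /\
    forall v : seq (Y + Y),
      loop_problem (rees_mul mul P) tau v <->
      kleene_star (image_lang Phi (loop_problem mul sigma)) v.
Proof.
pose iY y := (tau y).1.1. pose gY y := (tau y).1.2. pose jY y := (tau y).2.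
have Htau_eta : forall y, tau y = (iY y, gY y, jY y).
  by move=> y; rewrite /iY /gY /jY; case: (tau y) => [[]].
have [ci [Hci1 Hci2]] := canon_fun iY.
have [cj [Hcj1 Hcj2]] := canon_fun jY.
have Hs' : forall s, exists p : X * seq X, eval_word mul sigma p.1 p.2 = s.
  by move=> s; have [x [w H]] := Hsigma s; exists (x, w).
have [wd Hwd] := choice_fun Hs'.
pose fw s : seq (X + X) := map inl ((wd s).1 :: (wd s).2).
pose iw s : seq (X + X) := rev (map inr ((wd s).1 :: (wd s).2)).
have Hfw : forall c b s, lpath mul sigma c (fw s) b <-> b = Some (mul1 mul c s).
  by move=> c b s; rewrite /fw lpath_fwd // Hwd.
have Hiw : forall a b s, lpath mul sigma a (iw s) b <-> a = Some (mul1 mul b s).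
  by move=> a b s; rewrite /iw lpath_inv Hfw.
pose Q := option (option (Y * Y)).
pose trans := fun l : (Y + (Y * Y * Y) + (Y * Y * Y * X) + Y)%type =>
  match l with
  | inl (inl (inl y0)) => ((None : Q), fw (gY y0), [:: inl y0], (Some (Some (ci y0, cj y0)) : Q))
  | inl (inl (inr (a, r, y))) => ((Some (Some (a, r)) : Q), fw (mul (P (jY r) (iY y)) (gY y)),
                                  [:: inl y], (Some (Some (a, cj y)) : Q))
  | inl (inr (a, r, y, x)) => ((Some (Some (a, cj y)) : Q),
                               iw (mul (P (jY r) (iY y)) (gY y)) ++ [:: inr x; inl x],
                               [:: inr y], (Some (Some (a, cj r)) : Q))
  | inr y => ((Some (Some (ci y, cj y)) : Q), iw (gY y), [:: inr y], (Some None : Q))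
  end.
pose delta := map trans (enum {: (Y + (Y * Y * Y) + (Y * Y * Y * X) + Y)%type}).
pose final := fun q : Q => q == Some None.
have inD : forall l q a b q', trans l = (q, a, b, q') -> List.In (q, a, b, q') delta.
  move=> l q a b q' <-. apply: In_map. apply: In_mem. by rewrite mem_enum.
pose Phi := fun u v => transducer_accepts final delta (None : Q) u v.
exists Phi; split.
  by exists Q, None, final, delta => u v.
have sound : forall q u v, transducer_accepts final delta q u v ->
  match q with
  | None => lpath mul sigma None u None -> lpath (rees_mul mul P) tau None v None
  | Some None => u = [::] /\ v = [::]
  | Some (Some (a, r)) => forall g, lpath mul sigma (Some g) u None ->
       lpath (rees_mul mul P) tau (Some (iY a, g, jY r)) v None
  end.
  move=> q u v; elim => {q u v}.
  - by move=> q; rewrite /final => /eqP ->.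
  - move=> q a b q' u v Hin Hacc IH.
    have [l Hl] := In_map_inv Hin.
    move: Hl IH. rewrite /trans.
    case: l => [[[y0|[[a0 r] y]]|[[[a0 r] y] x]]|y] /= [<- <- <- <-] IH.
    + move=> /lpath_cat [m [/Hfw -> Hu]] /=.
      have := IH _ Hu. by rewrite Hci1 Hcj1 -Htau_eta.
    + move=> g /lpath_cat [m [/Hfw -> Hu]] /=.
      have := IH _ Hu. by rewrite Hcj1 Htau_eta /= mul_assoc.
    + move=> g /lpath_cat [m [/lpath_cat [c [/Hiw Hc Hxx]] Hu]].
      move: Hxx => /= [d [Hd Hdm]]. subst c m.
      exists (Some (iY a0, mul1 mul d (sigma x), jY r)). split; last first.
        by have := IH _ Hu; rewrite Hcj1.
      rewrite Htau_eta /= Hcj1. case: Hc => ->. by rewrite /= mul_assoc.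
    + move: IH => [-> ->] g. rewrite cats0 => /Hiw /= [->].
      exists None; split => //. by rewrite Hci1 Hcj1 /= -Htau_eta.
have comp : forall v (m : I * S * J) a r, iY a = m.1.1 -> jY r = m.2 ->
    lpath (rees_mul mul P) tau (Some m) v None ->
    exists v1 v2, v = v1 ++ v2 /\
      (exists u1, lpath mul sigma (Some m.1.2) u1 None /\
         transducer_accepts final delta (Some (Some (ci a, cj r))) u1 v1) /\
      lpath (rees_mul mul P) tau None v2 None.
  elim => [|[y|y] v IH] [[i g] j] a r /= Ha Hr.
  - by case.
  - rewrite Htau_eta /= => H.
    have [v1 [v2 [-> [[u1 [Hu1 Hacc]] Hv2]]]] := IH (i, mul (mul g (P j (iY y))) (gY y), jY y) a y Ha erefl H.
    exists (inl y :: v1), v2; split => //; split => //.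
    exists (fw (mul (P j (iY y)) (gY y)) ++ u1). split.
    + apply/lpath_cat; exists (Some (mul1 mul (Some g) (mul (P j (iY y)) (gY y)))).
      split; first by apply/Hfw. by rewrite /= mul_assoc.
    + have -> : inl y :: v1 = [:: inl y] ++ v1 by [].
      apply: ta_step Hacc.
      have -> : j = jY (cj r) by rewrite Hcj1.
      apply: (inD (inl (inl (inr (ci a, cj r, y))))). by [].
  - move=> [[[[i' g'] j']|] [Hc Hv]].
    + move: Hc; rewrite Htau_eta /= => -[Hi Hg Hj].
      have [d [y2 Hd]] := last_letter Htau (i', g', j').
      have Hj2 : jY y2 = j'.
        by move: Hd; rewrite Htau_eta; case: d => [[[i3 g3] j3]|] /=; case=> _ _ ->.
      have Ha' : iY a = i' by rewrite Hi.
      have [v1 [v2 [-> [[u1 [Hu1 Hacc]] Hv2]]]] := IH (i', g', j') a y2 Ha' Hj2 Hv.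
      have [d' [x Hx]] := last_letter Hsigma g'.
      exists (inr y :: v1), v2; split => //; split => //.
      exists (iw (mul (P j' (iY y)) (gY y)) ++ [:: inr x; inl x] ++ u1). split.
      * apply/lpath_cat; exists (Some g'); split.
          apply/Hiw. by rewrite /= -Hg mul_assoc.
        rewrite /=. exists d'; rewrite -Hx. by split.
      * have -> : inr y :: v1 = [:: inr y] ++ v1 by [].
        rewrite catA. apply: ta_step Hacc.
        have -> : cj r = cj y by apply: Hcj2; rewrite Hr Hj.
        rewrite -Hj2. apply: (inD (inl (inr (ci a, y2, y, x)))). by [].
    + move: Hc; rewrite Htau_eta /= => -[Hi Hg Hj].
      exists [:: inr y], v; split => //; split => //.
      exists (iw (gY y)); split.
      * apply/Hiw => /=. by rewrite Hg.
      * have -> : [:: inr y] = [:: inr y] ++ [::] by [].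
        have -> : iw (gY y) = iw (gY y) ++ [::] by rewrite cats0.
        have Hfin : transducer_accepts final delta (Some None : Q) [::] [::] by apply: ta_final.
        apply: ta_step Hfin.
        have -> : ci a = ci y by apply: Hci2; rewrite Ha Hi.
        have -> : cj r = cj y by apply: Hcj2; rewrite Hr Hj.
        apply: (inD (inr y)). by [].
have loopsM : forall n v, size v <= n -> lpath (rees_mul mul P) tau None v None ->
    kleene_star (image_lang Phi (loop_problem mul sigma)) v.
  elim=> [|n IHn] [|[y|y] v] //= Hs H; try exact: ks_nil.
  - have [v1 [v2 [Hv [[u1 [Hu1 Hacc]] Hv2]]]] := comp v (tau y) y y erefl erefl H.
    rewrite Hv. have -> : inl y :: v1 ++ v2 = (inl y :: v1) ++ v2 by [].
    apply: ks_cat.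
    + exists (fw (gY y) ++ u1). split.
      * rewrite /loop_problem. apply/lpath_cat; exists (Some (gY y)); split => //.
        by apply/Hfw.
      * have -> : inl y :: v1 = [:: inl y] ++ v1 by [].
        apply: ta_step Hacc. apply: (inD (inl (inl (inl y)))). by [].
    + apply: IHn Hv2. move: Hs; rewrite Hv size_cat => Hs.
      lia.
  - by case: H => c [].
move=> v; split.
- exact: (loopsM (size v)).
- elim => [|u w [u0 [Hu0 Hphi]] _ IH] //.
  apply/lpath_cat; exists None; split => //.
  exact: (sound None u0 u Hphi Hu0).
Qed.
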